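(* Let $\Gamma^*$ be a group of permutations of $\mathbb Q\times\mathbb Z$ with $\Gamma^*\supseteq\Gamma(+1)$. If $\Gamma^*$ contains at least one negative permutation, then $\Gamma^*$ contains all negative permutations of $\mathbb Q\times\mathbb Z$.
   Context: $\mathbb Q\times\mathbb Z$ denotes the set $\mathbb Q\times\mathbb Z$ with the lexicographic order. A vertical is a set $\{r\}\times\mathbb Z$. A permutation is systemic if it maps every vertical onto a vertical; a systemic permutation is positive if it preserves the order on each vertical and negative if it reverses the order on each vertical. $\Gamma(+1)$ is the group of all positive permutations of $\mathbb Q\times\mathbb Z$ (the automorphism group of the successor relation). *)

(* Defs.v *)
From mathcomp Require Import all_boot all_order all_algebra.
Set Implicit Arguments. Unset Strict Implicit. Unset Printing Implicit Defensive.
Import Order.TTheory GRing.Theory Num.Theory.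
Local Open Scope ring_scope.

Definition QZ := (rat * int)%type.

Definition vertical (r : rat) (p : QZ) : Prop := p.1 = r.

Definition is_perm (f : QZ -> QZ) : Prop := bijective f.

Definition systemic (f : QZ -> QZ) : Prop :=
  is_perm f /\
  forall r : rat, exists s : rat,
    forall p : QZ, vertical s p <-> exists q : QZ, vertical r q /\ f q = p.

Definition positive (f : QZ -> QZ) : Prop :=
  systemic f /\
  forall (r : rat) (m n : int), m < n -> (f (r, m)).2 < (f (r, n)).2.

Definition negative (f : QZ -> QZ) : Prop :=
  systemic f /\
  forall (r : rat) (m n : int), m < n -> (f (r, n)).2 < (f (r, m)).2.

Definition perm_group (G : (QZ -> QZ) -> Prop) : Prop :=
  (forall f, G f -> is_perm f) /\
  G (fun x => x) /\
  (forall f g, G f -> G g -> G (f \o g)) /\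
  (forall f, G f -> exists g, G g /\ cancel f g /\ cancel g f).

(* Main.v *)
Require Import Defs.
From mathcomp Require Import all_boot all_order all_algebra.
From Stdlib Require Import FunctionalExtensionality.
Import Order.TTheory GRing.Theory Num.Theory.
Local Open Scope ring_scope.

Lemma sys_vert f : systemic f -> forall p q : QZ, p.1 = q.1 -> (f p).1 = (f q).1.
Proof.
move=> [_ H] p q E; have [s Hs] := H p.1.
have A : vertical s (f p) by apply/Hs; exists p.
have B : vertical s (f q) by apply/Hs; exists q; split=> //; rewrite /vertical E.
by rewrite A B.
Qed.

Lemma inv_vert f g : systemic f -> cancel f g -> cancel g f ->
  forall p q : QZ, p.1 = q.1 -> (g p).1 = (g q).1.
Proof.
move=> [_ H] fK gK p q E; have [s Hs] := H (g p).1.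
have A : vertical s p by apply/Hs; exists (g p).
have B : vertical s q by rewrite /vertical -E.
have [q' [Hq' <-]] := (Hs q).1 B.
by rewrite fK Hq'.
Qed.

Lemma vert_sys f g : cancel f g -> cancel g f ->
  (forall p q : QZ, p.1 = q.1 -> (f p).1 = (f q).1) ->
  (forall p q : QZ, p.1 = q.1 -> (g p).1 = (g q).1) -> systemic f.
Proof.
move=> fK gK Hf Hg; split; first by exists g.
move=> r; exists (f (r, 0)).1 => p; split.
- move=> Hp; exists (g p); split; last by rewrite gK.
  rewrite /vertical; have -> : r = (g (f (r, 0))).1 by rewrite fK.
  by apply: Hg.
- by move=> [q [Hq <-]]; rewrite /vertical; apply: Hf.
Qed.

Theorem proposition3 (G : (QZ -> QZ) -> Prop) :
  perm_group G ->
  (forall f, positive f -> G f) ->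
  (exists f, negative f /\ G f) ->
  forall f, negative f -> G f.
Proof.
move=> [_ [_ [Gc Gi]]] Gpos [f0 [[S0 N0] G0]] f [Sf Nf].
have [g [Gg [f0K gK]]] := Gi f0 G0.
have [[finv fK finvK] _] := Sf.
have Hh : positive (g \o f).
  split.
  - apply: (@vert_sys _ (finv \o f0)).
    + by move=> x /=; rewrite gK fK.
    + by move=> x /=; rewrite finvK f0K.
    + move=> p q E /=; exact: (inv_vert _ _ S0 f0K gK _ _ (sys_vert _ Sf _ _ E)).
    + move=> p q E /=; exact: (inv_vert _ _ Sf fK finvK _ _ (sys_vert _ S0 _ _ E)).
  - move=> r m n mn /=.
    set a := f (r, m); set b := f (r, n).
    have Eab : a.1 = b.1 by apply: (sys_vert _ Sf).
    have ba : b.2 < a.2 by exact: Nf.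
    have Eg : (g a).1 = (g b).1 by apply: (inv_vert _ _ S0 f0K gK).
    case: (ltgtP (g a).2 (g b).2) => // H.
    + have := N0 (g a).1 _ _ H.
      rewrite -surjective_pairing Eg -surjective_pairing !gK => ab.
      by move: (lt_trans ab ba); rewrite ltxx.
    + have E : g a = g b by rewrite [g a]surjective_pairing [g b]surjective_pairing Eg H.
      have : a = b by rewrite -(gK a) E gK.
      by move=> abe; move: ba; rewrite abe ltxx.
have := Gc _ _ G0 (Gpos _ Hh).
have -> : f0 \o (g \o f) = f by apply: functional_extensionality => x /=; rewrite gK.
done.
Qed.
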